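(* Let $k\ge1$ and let $\hat\theta_1,\dots,\hat\theta_k\in\mathbb R$ with $e^{i\hat\theta_1},\dots,e^{i\hat\theta_k}$ pairwise distinct. Let $\hat A=(\phi_k(e^{i\hat\theta_1}),\dots,\phi_k(e^{i\hat\theta_k}))\in\mathbb C^{(k+1)\times k}$, $V$ the column space of $\hat A$, $V^\perp$ its (one-dimensional) orthogonal complement in $\mathbb C^{k+1}$, $P_{V^\perp}$ the orthogonal projection onto $V^\perp$, and $v$ a unit vector in $V^\perp$. Then for every $\theta\in\mathbb R$, $$\min_{\hat a\in\mathbb C^k}\|\hat A\hat a-\phi_k(e^{i\theta})\|_2=\|P_{V^\perp}\phi_k(e^{i\theta})\|_2=|v^*\phi_k(e^{i\theta})|\ge\frac{1}{2^k}\prod_{j=1}^k|e^{i\theta}-e^{i\hat\theta_j}|.$$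
   Context: $\phi_s(z)=(1,z,\dots,z^s)^T\in\mathbb C^{s+1}$; $v^*$ is the conjugate transpose of $v$. *)

(* Defs.v *)
From Stdlib Require Import Reals.
Open Scope R_scope.

Record Cplx := mkC { Re : R ; Im : R }.

Definition C0 : Cplx := mkC 0 0.
Definition C1 : Cplx := mkC 1 0.
Definition Cadd (x y : Cplx) : Cplx := mkC (Re x + Re y) (Im x + Im y).
Definition Copp (x : Cplx) : Cplx := mkC (- Re x) (- Im x).
Definition Csub (x y : Cplx) : Cplx := Cadd x (Copp y).
Definition Cmul (x y : Cplx) : Cplx :=
  mkC (Re x * Re y - Im x * Im y) (Re x * Im y + Im x * Re y).
Definition Cconj (x : Cplx) : Cplx := mkC (Re x) (- Im x).
Definition Cmod (x : Cplx) : R := sqrt (Re x ^ 2 + Im x ^ 2).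
Fixpoint Cpow (x : Cplx) (n : nat) : Cplx :=
  match n with O => C1 | S m => Cmul x (Cpow x m) end.
Definition Cexpi (t : R) : Cplx := mkC (cos t) (sin t).

Fixpoint Csum (n : nat) (f : nat -> Cplx) : Cplx :=
  match n with O => C0 | S m => Cadd (Csum m f) (f m) end.
Fixpoint Rsum (n : nat) (f : nat -> R) : R :=
  match n with O => 0 | S m => Rsum m f + f m end.
Fixpoint Rprod (n : nat) (f : nat -> R) : R :=
  match n with O => 1 | S m => Rprod m f * f m end.

(* Vectors of Cplx^(k+1) are functions nat -> Cplx, only indices 0..k matter.
   Vectors of Cplx^k (coefficients a-hat) use indices 1..k, as in the paper. *)

Definition phi (s : nat) (z : Cplx) : nat -> Cplx := fun i => Cpow z i.

Definition vnorm (k : nat) (x : nat -> Cplx) : R :=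
  sqrt (Rsum (S k) (fun i => Cmod (x i) ^ 2)).

Definition vdot (k : nat) (v x : nat -> Cplx) : Cplx :=
  Csum (S k) (fun i => Cmul (Cconj (v i)) (x i)).

Definition vsub (x y : nat -> Cplx) : nat -> Cplx := fun i => Csub (x i) (y i).

Definition Ahat_mul (k : nat) (th : nat -> R) (a : nat -> Cplx) : nat -> Cplx :=
  fun i => Csum k (fun j => Cmul (phi k (Cexpi (th (S j))) i) (a (S j))).

Definition in_V (k : nat) (th : nat -> R) (x : nat -> Cplx) : Prop :=
  exists a : nat -> Cplx, forall i, (i <= k)%nat -> x i = Ahat_mul k th a i.

Definition in_Vperp (k : nat) (th : nat -> R) (w : nat -> Cplx) : Prop :=
  forall j, (1 <= j <= k)%nat -> vdot k (phi k (Cexpi (th j))) w = C0.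

(* p = P_{V^perp} x : the orthogonal projection of x onto V^perp,
   i.e. p in V^perp and x - p in V (= (V^perp)^perp). *)
Definition is_proj_Vperp (k : nat) (th : nat -> R) (x p : nat -> Cplx) : Prop :=
  in_Vperp k th p /\ in_V k th (vsub x p).

(* Main.v *)
Require Import Defs.
From Stdlib Require Import Reals Lra.
Set Warnings "-notation-overridden,-ambiguous-paths,-deprecated,-redundant-canonical-projection,-projection-no-head-constant".
From HB Require Import structures.
From mathcomp Require Import all_boot all_order all_algebra.
From mathcomp Require Import Rstruct.
Set Implicit Arguments. Unset Strict Implicit. Unset Printing Implicit Defensive.
Import Order.TTheory GRing.Theory Num.Theory.
Open Scope R_scope.

Definition c2p (x : Cplx) : R * R := (Defs.Re x, Defs.Im x).
Definition p2c (p : R * R) : Cplx := mkC p.1 p.2.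
Lemma c2pK : cancel c2p p2c. Proof. by case. Qed.
HB.instance Definition _ := Choice.copy Cplx (can_type c2pK).

Lemma CaddA : associative Cadd.
Proof. move=> [a b][c d][e f]; rewrite /Cadd /=; f_equal; rewrite /=; lra. Qed.
Lemma CaddC : commutative Cadd.
Proof. move=> [a b][c d]; rewrite /Cadd /=; f_equal; rewrite /=; lra. Qed.
Lemma Cadd0 : left_id C0 Cadd.
Proof. move=> [a b]; rewrite /Cadd /C0 /=; f_equal; rewrite /=; lra. Qed.
Lemma CaddN : left_inverse C0 Copp Cadd.
Proof. move=> [a b]; rewrite /Cadd /C0 /Copp /=; f_equal; rewrite /=; lra. Qed.
HB.instance Definition _ := GRing.isZmodule.Build Cplx CaddA CaddC Cadd0 CaddN.
Lemma CmulA : associative Cmul.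
Proof. move=> [a b][c d][e f]; rewrite /Cmul /=; f_equal; rewrite /=; ring. Qed.
Lemma CmulC : commutative Cmul.
Proof. move=> [a b][c d]; rewrite /Cmul /=; f_equal; rewrite /=; ring. Qed.
Lemma Cmul1 : left_id Defs.C1 Cmul.
Proof. move=> [a b]; rewrite /Cmul /=; f_equal; rewrite /=; ring. Qed.
Lemma CmulDl : left_distributive Cmul Cadd.
Proof. move=> [a b][c d][e f]; rewrite /Cmul /Cadd /=; f_equal; rewrite /=; ring. Qed.
Lemma Cone_neq0 : Defs.C1 != C0.
Proof. apply/eqP => [[]] /= H; lra. Qed.
HB.instance Definition _ := GRing.Zmodule_isComNzRing.Build Cplx CmulA CmulC Cmul1 CmulDl Cone_neq0.
Definition Cinv (x : Cplx) : Cplx :=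
  mkC (Defs.Re x / (Defs.Re x ^ 2 + Defs.Im x ^ 2)) (- Defs.Im x / (Defs.Re x ^ 2 + Defs.Im x ^ 2)).
Lemma CmulV (x : Cplx) : x != C0 -> Cmul (Cinv x) x = Defs.C1.
Proof.
case: x => a b /eqP Hx.
have H : (a ^ 2 + b ^ 2 <> 0).
  move=> H0; apply: Hx.
  have ha : a = 0 by nra.
  have hb : b = 0 by nra.
  by rewrite /C0 ha hb.
rewrite /Cmul /Cinv /Defs.C1 /=; f_equal; rewrite /=; field; (try (by auto)); move=> H1; apply: H; nra.
Qed.
Lemma Cinv0 : Cinv C0 = C0.
Proof. rewrite /Cinv /C0 /=; f_equal; rewrite /Rdiv; ring_simplify; auto. Qed.
HB.instance Definition _ := GRing.ComNzRing_isField.Build Cplx CmulV Cinv0.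

Definition rc (r : R) : Cplx := mkC r 0.
Lemma CmodE (x : Cplx) : Cmod x = sqrt (Defs.Re x ^ 2 + Defs.Im x ^ 2). Proof. by []. Qed.
Lemma Cmod_ge0 x : 0 <= Cmod x. Proof. exact: sqrt_pos. Qed.
Lemma Cmod_sq x : Cmod x ^ 2 = Defs.Re x ^ 2 + Defs.Im x ^ 2.
Proof. rewrite /Cmod pow2_sqrt //; nra. Qed.
Lemma Cmod_mul x y : Cmod (Cmul x y) = Cmod x * Cmod y.
Proof.
case: x => a b; case: y => c d; rewrite /Cmod /Cmul /= -sqrt_mult; try nra.
f_equal; ring.
Qed.
Lemma Cmod_conj x : Cmod (Cconj x) = Cmod x.
Proof. case: x => a b; rewrite /Cmod /=; f_equal; ring. Qed.
Lemma Cmod_opp x : Cmod (Copp x) = Cmod x.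
Proof. case: x => a b; rewrite /Cmod /=; f_equal; ring. Qed.
Lemma Cmod_add x y : Cmod (Cadd x y) <= Cmod x + Cmod y.
Proof.
case: x => a b; case: y => c d; rewrite /Cmod /=.
set X := sqrt (a^2+b^2); set Y := sqrt (c^2+d^2).
have hX : X ^ 2 = a^2+b^2 by rewrite /X pow2_sqrt; nra.
have hY : Y ^ 2 = c^2+d^2 by rewrite /Y pow2_sqrt; nra.
have X0 : 0 <= X by apply: sqrt_pos.
have Y0 : 0 <= Y by apply: sqrt_pos.
have hXY : a * c + b * d <= X * Y.
  have h1 : (a*c+b*d)^2 <= (X*Y)^2 by rewrite Rpow_mult_distr hX hY; have := pow2_ge_0 (a*d-b*c); nra.
  have h2 : 0 <= X * Y by nra.
  destruct (Rle_or_lt (a*c+b*d) (X*Y)) as [|hlt]; first done.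
  have : (X*Y) * (X*Y) < (a*c+b*d) * (a*c+b*d) by apply: Rmult_le_0_lt_compat; nra.
  nra.
rewrite -(sqrt_pow2 (X+Y)); last nra.
apply: sqrt_le_1_alt; nra.
Qed.
Lemma Cmod_expi t : Cmod (Cexpi t) = 1.
Proof. have := sin2_cos2 t; rewrite /Rsqr => h; rewrite /Cmod /= (_ : cos t ^ 2 + sin t ^ 2 = 1) ?sqrt_1 //; nra. Qed.
Lemma Cmod0_eq x : Cmod x = 0 -> x = C0.
Proof.
case: x => a b; rewrite /Cmod => H; have H2 : a ^ 2 + b ^ 2 = 0 by apply: sqrt_eq_0 H; nra.
rewrite /C0; f_equal; nra.
Qed.

Lemma rcD' a b : rc (a + b) = Cadd (rc a) (rc b).
Proof. rewrite /rc /Cadd /=; f_equal; ring. Qed.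
Lemma rcM' a b : rc (a * b) = Cmul (rc a) (rc b).
Proof. rewrite /rc /Cmul /=; f_equal; ring. Qed.
Lemma rcN' a : rc (- a) = Copp (rc a).
Proof. rewrite /rc /Copp /=; f_equal; ring. Qed.
Lemma rc_inj a b : rc a = rc b -> a = b.
Proof. by case. Qed.
Lemma rc0' : rc 0 = C0. Proof. by []. Qed.
Lemma rc1' : rc 1 = Defs.C1. Proof. by []. Qed.
Lemma Cmul_conj' x : Cmul x (Cconj x) = rc (Cmod x ^ 2).
Proof. rewrite Cmod_sq; case: x => a b; rewrite /rc /Cmul /=; f_equal; ring. Qed.
Lemma CconjD' x y : Cconj (Cadd x y) = Cadd (Cconj x) (Cconj y).
Proof. case: x => a b; case: y => c d; rewrite /Cconj /Cadd /=; f_equal; ring. Qed.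
Lemma CconjM' x y : Cconj (Cmul x y) = Cmul (Cconj x) (Cconj y).
Proof. case: x => a b; case: y => c d; rewrite /Cconj /Cmul /=; f_equal; ring. Qed.
Lemma CconjN' x : Cconj (Copp x) = Copp (Cconj x).
Proof. case: x => a b; rewrite /Cconj /Copp /=; f_equal; ring. Qed.
Lemma CconjK x : Cconj (Cconj x) = x.
Proof. case: x => a b; rewrite /Cconj /=; f_equal; ring. Qed.
Lemma Cconj_rc r : Cconj (rc r) = rc r.
Proof. rewrite /Cconj /rc /=; f_equal; ring. Qed.
Lemma Cconj0' : Cconj C0 = C0.
Proof. rewrite /Cconj /C0 /=; f_equal; ring. Qed.
Lemma Cconj1' : Cconj Defs.C1 = Defs.C1.
Proof. rewrite /Cconj /Defs.C1 /=; f_equal; ring. Qed.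
Lemma Csum_rc n f : Csum n (fun i => rc (f i)) = rc (Rsum n f).
Proof. elim: n => [|n IH] //=; by rewrite IH rcD'. Qed.

Lemma Rsum_ext n f g : (forall i, (i < n)%nat -> f i = g i) -> Rsum n f = Rsum n g.
Proof.
elim: n => [|n IH] H //=; rewrite IH ?H //; move=> i Hi; apply: H; exact: ltnW.
Qed.
Lemma Rsum_scal n c f : Rsum n (fun i => c * f i) = c * Rsum n f.
Proof. elim: n => [|n IH] /=; [ring | rewrite IH; ring]. Qed.
Lemma Rsum_ge0 n f : (forall i, 0 <= f i) -> 0 <= Rsum n f.
Proof. move=> H; elim: n => [|n IH] /=; [lra | have h := H n; lra]. Qed.
Lemma Rsum_le n f g : (forall i, f i <= g i) -> Rsum n f <= Rsum n g.
Proof. move=> H; elim: n => [|n IH] /=; [lra | have h := H n; lra]. Qed.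
Lemma Rsum_add n f g : Rsum n (fun i => f i + g i) = Rsum n f + Rsum n g.
Proof. elim: n => [|n IH] /=; [ring | rewrite IH; ring]. Qed.
Lemma Rsum_shift n f : Rsum (S n) f = f 0%nat + Rsum n (fun i => f (S i)).
Proof. elim: n => [|n IH] /=; [ring | rewrite /= in IH; rewrite IH; ring]. Qed.
Lemma Rsum_sq n f : (forall i, 0 <= f i) -> Rsum n (fun i => f i ^ 2) <= (Rsum n f) ^ 2.
Proof.
move=> H; elim: n => [|n IH]; cbn [Rsum]; first lra.
have h1 := Rsum_ge0 n H; have h2 := H n. nra.
Qed.
Lemma Rprod_ge0 n f : (forall i, 0 <= f i) -> 0 <= Rprod n f.
Proof. move=> H; elim: n => [|n IH] /=; [lra | have h := H n; nra]. Qed.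

Lemma vnorm_ext k f g : (forall i, (i <= k)%nat -> f i = g i) -> vnorm k f = vnorm k g.
Proof. move=> H; rewrite /vnorm; f_equal; apply: Rsum_ext => i Hi; rewrite H //. Qed.
Lemma vnorm_scal k c f : vnorm k (fun i => Cmul c (f i)) = Cmod c * vnorm k f.
Proof.
rewrite /vnorm (Rsum_ext (g := fun i => Cmod c ^ 2 * Cmod (f i) ^ 2)); last first.
  by move=> i _; rewrite Cmod_mul; ring.
rewrite Rsum_scal sqrt_mult; last first.
- apply: Rsum_ge0 => i; apply: pow2_ge_0.
- apply: pow2_ge_0.
by rewrite sqrt_pow2 //; apply: Cmod_ge0.
Qed.
Lemma vnorm_ge0 k f : 0 <= vnorm k f. Proof. exact: sqrt_pos. Qed.
Lemma vnorm1 k f : vnorm k f = 1 -> Rsum (S k) (fun i => Cmod (f i) ^ 2) = 1.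
Proof.
rewrite /vnorm => H; rewrite -(pow2_sqrt (Rsum _ _)); first by rewrite H; ring.
apply: Rsum_ge0 => i; apply: pow2_ge_0.
Qed.
Lemma vnorm_l1 k f : vnorm k f <= Rsum (S k) (fun i => Cmod (f i)).
Proof.
have h0 : 0 <= Rsum (S k) (fun i => Cmod (f i)) by apply: Rsum_ge0 => i; apply: Cmod_ge0.
rewrite /vnorm -(sqrt_pow2 _ h0).
apply: sqrt_le_1_alt; apply: Rsum_sq => i; apply: Cmod_ge0.
Qed.

From mathcomp Require Import ring.
Definition nsq (x : Cplx) : R := Cmod x ^ 2.
Definition Rone : R := 1.
Definition Rtwo : R := 2.
Lemma nsq_ge0 x : 0 <= nsq x. Proof. exact: pow2_ge_0. Qed.
Lemma rcB' a b : rc (a - b) = Cadd (rc a) (Copp (rc b)).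
Proof. by rewrite /Rminus rcD' rcN'. Qed.

Open Scope ring_scope.
Notation cc := Cconj.
Lemma CconjD x y : cc (x + y) = cc x + cc y. Proof. exact: CconjD'. Qed.
Lemma CconjM x y : cc (x * y) = cc x * cc y. Proof. exact: CconjM'. Qed.
Lemma CconjN x : cc (- x) = - cc x. Proof. exact: CconjN'. Qed.
Lemma CconjB x y : cc (x - y) = cc x - cc y. Proof. by rewrite CconjD CconjN. Qed.
Lemma Cconj0 : cc 0 = 0. Proof. exact: Cconj0'. Qed.
Lemma Cconj1 : cc 1 = 1. Proof. exact: Cconj1'. Qed.
Lemma Cconj_sum I (r : seq I) (P : pred I) (F : I -> Cplx) :
  cc (\sum_(i <- r | P i) F i) = \sum_(i <- r | P i) cc (F i).
Proof. exact: (big_morph cc CconjD Cconj0). Qed.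
Lemma Cconj_prod I (r : seq I) (P : pred I) (F : I -> Cplx) :
  cc (\prod_(i <- r | P i) F i) = \prod_(i <- r | P i) cc (F i).
Proof. exact: (big_morph cc CconjM Cconj1). Qed.
Lemma CconjX x n : cc (x ^+ n) = cc x ^+ n.
Proof. elim: n => [|n IH]; first by rewrite !expr0 Cconj1. by rewrite !exprS CconjM IH. Qed.
Lemma CpowE z n : Cpow z n = z ^+ n.
Proof. elim: n => [|n IH] //=; by rewrite exprS -IH. Qed.
Lemma CsumE n f : Csum n f = \sum_(i < n) f i.
Proof. elim: n => [|n IH]; first by rewrite big_ord0. by rewrite big_ord_recr /= -IH. Qed.
Lemma rcD a b : rc (Rplus a b) = rc a + rc b. Proof. exact: rcD'. Qed.
Lemma rcB a b : rc (Rminus a b) = rc a - rc b. Proof. exact: rcB'. Qed.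
Lemma Cmul_conj x : x * cc x = rc (nsq x). Proof. exact: Cmul_conj'. Qed.
Lemma Cconj_mul x : cc x * x = rc (nsq x). Proof. by rewrite mulrC Cmul_conj. Qed.
Lemma Csum_ext n f g : (forall i, (i < n)%N -> f i = g i) -> Csum n f = Csum n g.
Proof. rewrite !CsumE => H; apply: eq_bigr => i _; exact: H. Qed.

Definition zz (th : nat -> R) (j : nat) : Cplx := Cexpi (th j.+1).

Lemma vdotE k v w : vdot k v w = \sum_(i < k.+1) cc (v i) * w i.
Proof. by rewrite /vdot CsumE. Qed.
Lemma AhatE k th a i : Ahat_mul k th a i = \sum_(j < k) zz th j ^+ i * a j.+1.
Proof. by rewrite /Ahat_mul CsumE; apply: eq_bigr => j _; rewrite /phi CpowE. Qed.
Lemma vdot_ext2 k v f g : (forall i, (i <= k)%N -> f i = g i) -> vdot k v f = vdot k v g.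
Proof. move=> H; rewrite !vdotE; apply: eq_bigr => i _; by rewrite H // -ltnS. Qed.
Lemma vdot_ext1 k v w f : (forall i, (i <= k)%N -> v i = w i) -> vdot k v f = vdot k w f.
Proof. move=> H; rewrite !vdotE; apply: eq_bigr => i _; by rewrite H // -ltnS. Qed.
Lemma vdotB k v f g : vdot k v (fun i => f i - g i) = vdot k v f - vdot k v g.
Proof. rewrite !vdotE -sumrB; apply: eq_bigr => i _; by rewrite mulrBr. Qed.
Lemma vdotBl k f g v : vdot k (fun i => f i - g i) v = vdot k f v - vdot k g v.
Proof. rewrite !vdotE -sumrB; apply: eq_bigr => i _; by rewrite CconjB mulrBl. Qed.
Lemma vdotZr k v c f : vdot k v (fun i => c * f i) = c * vdot k v f.
Proof. rewrite !vdotE mulr_sumr; apply: eq_bigr => i _; by rewrite mulrCA. Qed.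
Lemma vdotZl k c v f : vdot k (fun i => c * v i) f = cc c * vdot k v f.
Proof. rewrite !vdotE mulr_sumr; apply: eq_bigr => i _; by rewrite CconjM mulrA. Qed.
Lemma vdot_conj k v w : cc (vdot k v w) = vdot k w v.
Proof. rewrite !vdotE Cconj_sum; apply: eq_bigr => i _; by rewrite CconjM CconjK mulrC. Qed.
Lemma vdot_self k v : vdot k v v = rc (Rsum k.+1 (fun i => nsq (v i))).
Proof. rewrite /vdot -Csum_rc; apply: Csum_ext => i _; exact: Cconj_mul. Qed.

Lemma vdotA k th v a : in_Vperp k th v -> vdot k v (Ahat_mul k th a) = 0.
Proof.
move=> hv; rewrite vdotE.
under eq_bigr => i _ do rewrite AhatE mulr_sumr.
rewrite exchange_big /= big1 // => j _.
have hj := hv j.+1 (conj (ssrnat.leP (ltn0Sn j)) (ssrnat.leP (ltn_ord j))).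
rewrite vdotE in hj.
transitivity (a j.+1 * cc (\sum_(i < k.+1) cc (phi k (Cexpi (th j.+1)) i) * v i)); last by rewrite hj Cconj0 mulr0.
rewrite Cconj_sum mulr_sumr; apply: eq_bigr => i _.
rewrite CconjM CconjK /phi CpowE /zz; ring.
Qed.
Lemma CS k v w : vdot k v v = 1 -> Rle (Cmod (vdot k v w)) (vnorm k w).
Proof.
move=> hvv; set c := vdot k v w.
have key : vdot k (fun i => w i - c * v i) (fun i => w i - c * v i) = vdot k w w - c * cc c.
  rewrite vdotBl !vdotB !vdotZl !vdotZr hvv -[vdot k w v]vdot_conj -/c; ring.
rewrite !vdot_self Cmul_conj -rcB in key.
have key2 := rc_inj key.
have hA := Rsum_ge0 k.+1 (fun i => nsq_ge0 (w i - c * v i)).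
rewrite key2 in hA.
rewrite /vnorm -(sqrt_pow2 (Cmod c)); last exact: Cmod_ge0.
apply: sqrt_le_1_alt; rewrite /nsq in hA; lra.
Qed.

Definition rts k th : seq Cplx := [seq cc (zz th j) | j <- iota 0 k].
Definition Qp k th : {poly Cplx} := \prod_(r <- rts k th) ('X - r%:P).
Definition qv k th (i : nat) : Cplx := (Qp k th)`_i.

Lemma size_rts k th : size (rts k th) = k.
Proof. by rewrite size_map size_iota. Qed.
Lemma size_Qp k th : size (Qp k th) = k.+1.
Proof. by rewrite size_prod_XsubC size_rts. Qed.
Lemma qv_top k th : qv k th k = 1.
Proof.
have /monicP := monic_prod_XsubC (rts k th) predT id.
by rewrite lead_coefE -/(Qp k th) size_Qp.
Qed.
Lemma Qp_horner k th x : (Qp k th).[x] = \sum_(i < k.+1) qv k th i * x ^+ i.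
Proof. by rewrite (horner_coef_wide _ (eq_leq (size_Qp k th))). Qed.
Lemma Qp_root k th j : (j < k)%N -> (Qp k th).[cc (zz th j)] = 0.
Proof.
move=> hj; apply/eqP; rewrite -/(root _ _) root_prod_XsubC.
by apply/mapP; exists j => //; rewrite mem_iota.
Qed.
Lemma Qp_prod k th x : (Qp k th).[x] = \prod_(j < k) (x - cc (zz th j)).
Proof.
rewrite /Qp horner_prod big_map -(big_mkord predT (fun j => x - cc (zz th j))).
rewrite /index_iota subn0; apply: eq_bigr => j _; by rewrite hornerXsubC.
Qed.
Lemma uniq_rts k th :
  (forall j l, (1 <= j)%coq_nat /\ (j <= k)%coq_nat -> (1 <= l)%coq_nat /\ (l <= k)%coq_nat -> j <> l ->
             Cexpi (th j) <> Cexpi (th l)) -> uniq (rts k th).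
Proof.
move=> hd; rewrite map_inj_in_uniq ?iota_uniq // => j l.
rewrite !mem_iota !add0n => hj hl e; apply/eqP; apply/negP => /negP ne.
have e2 : zz th j = zz th l by rewrite -(CconjK (zz th j)) e CconjK.
apply: (hd j.+1 l.+1) e2.
- split; apply/ssrnat.leP => //.
- split; apply/ssrnat.leP => //.
- by move=> [] /eqP; apply/negP.
Qed.

Lemma Vperp_mult k th w :
  (forall j l, (1 <= j)%coq_nat /\ (j <= k)%coq_nat -> (1 <= l)%coq_nat /\ (l <= k)%coq_nat -> j <> l ->
             Cexpi (th j) <> Cexpi (th l)) ->
  in_Vperp k th w -> forall i, (i <= k)%N -> w i = w k * qv k th i.
Proof.
move=> hd hw.
pose P : {poly Cplx} := \poly_(i < k) (w i - w k * qv k th i).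
have P0 : P = 0.
  apply: (@roots_geq_poly_eq0 _ P (rts k th)).
  - apply/allP => r /mapP [j]; rewrite mem_iota add0n => hj ->.
    rewrite /root horner_poly; apply/eqP.
    have h1 := hw j.+1 (conj (ssrnat.leP (ltn0Sn j)) (ssrnat.leP hj)).
    rewrite vdotE in h1.
    have h2 := Qp_root th hj; rewrite Qp_horner in h2.
    transitivity (\sum_(i < k.+1) (w i - w k * qv k th i) * cc (zz th j) ^+ i).
      by rewrite big_ord_recr /= qv_top mulr1 subrr mul0r addr0.
    rewrite (eq_bigr (fun i : 'I_k.+1 => cc (phi k (Cexpi (th j.+1)) i) * w i - w k * (qv k th i * cc (zz th j) ^+ i))).
      by rewrite sumrB h1 -mulr_sumr h2 mulr0 subrr.
    move=> i _; rewrite /phi CpowE CconjX /zz; ring.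
  - exact: uniq_rts.
  - by rewrite size_rts size_poly.
move=> i hi; rewrite leq_eqVlt in hi; case/orP: hi => [/eqP -> | hi]; first by rewrite qv_top mulr1.
have := congr1 (fun p : {poly Cplx} => p`_i) P0; rewrite /= coef_poly hi coef0 => /eqP; rewrite subr_eq0 => /eqP //.
Qed.

Lemma zzK k th j : (j < k)%N -> \sum_(i < k) cc (qv k th i) * zz th j ^+ i = - zz th j ^+ k.
Proof.
move=> hj; have h := Qp_root th hj; rewrite Qp_horner in h.
have h2 : cc (\sum_(i < k.+1) qv k th i * cc (zz th j) ^+ i) = 0 by rewrite h Cconj0.
rewrite Cconj_sum big_ord_recr /= in h2.
have e1 : \sum_(i < k) cc (qv k th i) * zz th j ^+ i = \sum_(i < k) cc (qv k th i * cc (zz th j) ^+ i).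
  by apply: eq_bigr => i _; rewrite CconjM CconjX CconjK.
have e2 : zz th j ^+ k = cc (qv k th k * cc (zz th j) ^+ k).
  by rewrite CconjM CconjX CconjK qv_top Cconj1 mul1r.
by rewrite e1 e2; apply/eqP; rewrite -addr_eq0; apply/eqP.
Qed.

Lemma qperp_inV k th (u : nat -> Cplx) :
  (forall j l, (1 <= j)%coq_nat /\ (j <= k)%coq_nat -> (1 <= l)%coq_nat /\ (l <= k)%coq_nat -> j <> l ->
             Cexpi (th j) <> Cexpi (th l)) ->
  \sum_(i < k.+1) cc (qv k th i) * u i = 0 -> in_V k th u.
Proof.
move=> hd hu.
pose M : 'M[Cplx]_k := Vandermonde k (\row_(j < k) zz th j).
have uM : M \in unitmx.
  rewrite unitmxE unitfE det_Vandermonde.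
  apply/prodf_neq0 => i _; apply/prodf_neq0 => j hij; rewrite !mxE subr_eq0.
  apply/eqP => e; apply: (hd j.+1 i.+1 _ _ _ e).
  - split; apply/ssrnat.leP => //.
  - split; apply/ssrnat.leP => //.
  - move=> [] e2; move: hij; by rewrite e2 ltnn.
pose b := invmx M *m \col_(i < k) u i.
have hb : forall i : 'I_k, \sum_(j < k) zz th j ^+ i * b j 0 = u i.
  move=> i; have := congr1 (fun A : 'M[Cplx]_(k, 1) => A i 0) (mulKVmx uM (\col_(i<k) u i)).
  rewrite -/b !mxE => <-; apply: eq_bigr => j _; by rewrite !mxE.
exists (fun n => \sum_(j < k | j.+1 == n) b j 0).
move=> i hi; rewrite AhatE.
rewrite (eq_bigr (fun j : 'I_k => zz th j ^+ i * b j 0)); last first.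
  move=> j _; congr (_ * _); apply: big_pred1 => j' /=; by rewrite eqSS.
move/ssrnat.leP: hi; rewrite leq_eqVlt => /orP [/eqP -> | hi]; last by rewrite -(hb (Ordinal hi)).
rewrite (eq_bigr (fun j : 'I_k => - \sum_(i < k) cc (qv k th i) * (zz th j ^+ i * b j 0))); last first.
  move=> j _; rewrite (_ : zz th j ^+ k = - \sum_(i < k) cc (qv k th i) * zz th j ^+ i); last by rewrite zzK ?opprK.
  rewrite mulNr mulr_suml; congr (- _); apply: eq_bigr => i0 _; by rewrite mulrA.
rewrite sumrN exchange_big /=.
rewrite (eq_bigr (fun i : 'I_k => cc (qv k th i) * u i)); last first.
  by move=> i0 _; rewrite -mulr_sumr hb.
rewrite big_ord_recr /= qv_top Cconj1 mul1r in hu.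
by apply/eqP; rewrite -addr_eq0 addrC; apply/eqP.
Qed.

Lemma CmodB x y : Rle (Cmod (x - y)) (Rplus (Cmod x) (Cmod y)).
Proof. have := Cmod_add x (Copp y); rewrite Cmod_opp; exact. Qed.
Lemma CmodM x y : Cmod (x * y) = Rmult (Cmod x) (Cmod y).
Proof. exact: Cmod_mul. Qed.
Close Scope ring_scope.
Lemma Cmod1 : Cmod Defs.C1 = 1.
Proof. rewrite /Cmod; transitivity (sqrt 1); [f_equal; simpl; lra | exact sqrt_1]. Qed.
Lemma Cmod0 : Cmod C0 = 0.
Proof. rewrite /Cmod; transitivity (sqrt 0); [f_equal; simpl; lra | exact sqrt_0]. Qed.
Open Scope ring_scope.

Definition pXr (p : {poly Cplx}) (r : Cplx) := p * ('X - r%:P).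
Lemma coef_pXr p r i : (pXr p r)`_i = (if (i == 0)%N then 0 else p`_i.-1) - r * p`_i.
Proof. by rewrite /pXr mulrBr coefB coefMX coefMC mulrC. Qed.

Lemma L1_step N (p : {poly Cplx}) (r : Cplx) : (size p <= N)%N ->
  Rle (Rsum N.+1 (fun i => Cmod ((pXr p r)`_i)))
      (Rmult (Rplus Rone (Cmod r)) (Rsum N (fun i => Cmod p`_i))).
Proof.
move=> hs.
pose g := fun i => Rplus (Cmod (if (i == 0)%N then 0 else p`_i.-1)) (Rmult (Cmod r) (Cmod p`_i)).
have H1 : Rle (Rsum N.+1 (fun i => Cmod ((pXr p r)`_i))) (Rsum N.+1 g).
  by apply: Rsum_le => i; rewrite /g coef_pXr -CmodM; apply: CmodB.
apply: (Rle_trans _ _ _ H1); rewrite /g.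
rewrite Rsum_add Rsum_scal Rsum_shift /= Cmod0 nth_default // Cmod0 /Rone; lra.
Qed.

Lemma L1_prod (rs : seq Cplx) : (forall r, r \in rs -> Cmod r = Rone) ->
  Rle (Rsum (size rs).+1 (fun i => Cmod (\prod_(r <- rs) ('X - r%:P))`_i)) (pow Rtwo (size rs)).
Proof.
elim: rs => [|r rs IH] hr.
  rewrite big_nil /= coef1 /= Cmod1 /Rone; lra.
have IH' : Rle (Rsum (size rs).+1 (fun i => Cmod (\prod_(r <- rs) ('X - r%:P))`_i)) (pow Rtwo (size rs)).
  by apply: IH => x hx; apply: hr; rewrite in_cons hx orbT.
rewrite big_cons mulrC -/(pXr _ r).
eapply Rle_trans; first (apply: (@L1_step (size rs).+1); by rewrite size_prod_XsubC).
change (pow Rtwo (size (r :: rs))) with (Rmult Rtwo (pow Rtwo (size rs))).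
rewrite hr ?mem_head //.
apply: Rmult_le_compat.
- rewrite /Rone; lra.
- by apply: Rsum_ge0 => i; apply: Cmod_ge0.
- rewrite /Rone /Rtwo; lra.
- exact: IH'.
Qed.

Lemma qv_norm k th : Rle (vnorm k (qv k th)) (pow Rtwo k).
Proof.
apply: Rle_trans (vnorm_l1 _ _) _.
have := @L1_prod (rts k th); rewrite size_rts; apply.
move=> r /mapP [j _ ->]; rewrite Cmod_conj /zz Cmod_expi //.
Qed.

Lemma Cmod_prod k (f : nat -> Cplx) : Cmod (\prod_(j < k) f j) = Rprod k (fun j => Cmod (f j)).
Proof.
elim: k => [|k IH]; first by rewrite big_ord0 Cmod1.
by rewrite big_ord_recr CmodM IH.
Qed.

Lemma vdot_qv_phi k th t :
  vdot k (qv k th) (phi k (Cexpi t)) = \prod_(j < k) (Cexpi t - zz th j).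
Proof.
rewrite vdotE; transitivity (cc ((Qp k th).[cc (Cexpi t)])).
  rewrite Qp_horner Cconj_sum; apply: eq_bigr => i _.
  by rewrite CconjM CconjX CconjK /phi CpowE.
rewrite Qp_prod Cconj_prod; apply: eq_bigr => j _; by rewrite CconjB !CconjK.
Qed.

Lemma cc_eq0 x : cc x = 0 -> x = 0.
Proof. by move=> h; rewrite -(CconjK x) h Cconj0. Qed.

Lemma main k th
  (hdist : forall j l, (1 <= j)%coq_nat /\ (j <= k)%coq_nat -> (1 <= l)%coq_nat /\ (l <= k)%coq_nat -> j <> l ->
             Cexpi (th j) <> Cexpi (th l))
  (v : nat -> Cplx) (hv : in_Vperp k th v) (hv1 : vnorm k v = Rone) (theta : R) :
  let x := phi k (Cexpi theta) in
  let m := Cmod (vdot k v x) in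
  ((exists a : nat -> Cplx, vnorm k (vsub (Ahat_mul k th a) x) = m) /\
   (forall a : nat -> Cplx, Rle m (vnorm k (vsub (Ahat_mul k th a) x)))) /\
  ((exists p, is_proj_Vperp k th x p) /\
   (forall p, is_proj_Vperp k th x p -> vnorm k p = m)) /\
  Rge m (Rmult (Rinv (pow Rtwo k)) (Rprod k (fun j => Cmod (Csub (Cexpi theta) (Cexpi (th (S j))))))).
Proof.
move=> x m.
have hvv : vdot k v v = 1.
  rewrite vdot_self; have := vnorm1 hv1; rewrite /Rone => h.
  by rewrite (Rsum_ext (g := fun i => pow (Cmod (v i)) 2)) ?h // => i _.
have hvq := Vperp_mult hdist hv.
set c0 := v k in hvq.
have hnq : Rmult (Cmod c0) (vnorm k (qv k th)) = Rone.
  rewrite -vnorm_scal -hv1; apply: vnorm_ext => i hi; by rewrite hvq.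
have c0nz : c0 != 0.
  apply/eqP => e; rewrite e Cmod0 /Rone in hnq; lra.
have hperp : forall u, in_V k th u -> vdot k v u = 0.
  move=> u [a ha]; rewrite (vdot_ext2 _ (fun i hi => ha i (ssrnat.leP hi))); exact: vdotA.
have hinV : forall u, vdot k v u = 0 -> in_V k th u.
  move=> u hu; apply: (qperp_inV hdist).
  rewrite (vdot_ext1 _ hvq) vdotZl vdotE in hu.
  move/eqP: hu; rewrite mulf_eq0 => /orP [/eqP h|/eqP //].
  by move: c0nz; rewrite (cc_eq0 h) eqxx.
set s := vdot k v x.
have hxp : in_V k th (vsub x (fun i => s * v i)).
  apply: hinV; rewrite /vsub; change (vdot k v (fun i => x i - s * v i) = 0).
  by rewrite vdotB vdotZr hvv mulr1 subrr.
split; [split | split; [split|]].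
- case: hxp => a ha; exists a.
  rewrite (vnorm_ext (g := fun i => - s * v i)); last first.
    move=> i hi; rewrite /vsub -ha; last by apply/ssrnat.leP.
    by rewrite /vsub; change ((x i - s * v i) - x i = - s * v i); ring.
  by rewrite vnorm_scal hv1 Cmod_opp /Rone Rmult_1_r.
- move=> a; have := CS (vsub (Ahat_mul k th a) x) hvv.
  rewrite /vsub; change (Rle (Cmod (vdot k v (fun i => Ahat_mul k th a i - x i))) (vnorm k (fun i => Ahat_mul k th a i - x i)) -> Rle m (vnorm k (fun i => Ahat_mul k th a i - x i))).
  by rewrite vdotB (vdotA _ hv) sub0r Cmod_opp.
- exists (fun i => s * v i); split => //.
  move=> j hj; by rewrite vdotZr hv // mulr0.
- move=> p [hp1 hp2].
  have hpq := Vperp_mult hdist hp1.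
  set e := p k / c0.
  have hpe : forall i, (i <= k)%N -> p i = e * v i.
    move=> i hi; rewrite hpq // hvq // /e mulrA divfK //.
  have := hperp _ hp2; rewrite /vsub.
  change (vdot k v (fun i => x i - p i) = 0 -> vnorm k p = m).
  rewrite vdotB (vdot_ext2 _ hpe) vdotZr hvv mulr1 -/s => /eqP; rewrite subr_eq0 => /eqP hse.
  by rewrite (vnorm_ext hpe) vnorm_scal hv1 /Rone Rmult_1_r /m -/s hse.
- have hs : s = cc c0 * \prod_(j < k) (Cexpi theta - zz th j).
    by rewrite /s (vdot_ext1 _ hvq) vdotZl vdot_qv_phi.
  have hP := Cmod_prod k (fun j => Cexpi theta - zz th j).
  rewrite /m -/s hs CmodM Cmod_conj hP.
  have N0 := vnorm_ge0 k (qv k th).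
  have NB := qv_norm k th.
  have P0 : Rle 0 (Rprod k (fun j => Cmod (Cexpi theta - zz th j))).
    by apply: Rprod_ge0 => j; apply: Cmod_ge0.
  set P := Rprod _ _ in hP P0 *.
  set N := vnorm _ _ in N0 NB hnq.
  set a := Cmod c0 in hnq *.
  have Npos : Rlt 0 N.
    case: (Rle_lt_or_eq_dec _ _ N0) => // h; rewrite -h /Rone in hnq; lra.
  have ha : a = Rinv N.
    rewrite /Rone in hnq; apply: (Rmult_eq_reg_r N); last lra. rewrite Rinv_l; [exact: hnq | lra].
  have : Rle (Rinv (pow Rtwo k)) a.
    rewrite ha; apply: Rinv_le_contravar => //.
  change (Csub (Cexpi theta) (Cexpi (th (S _)))) with (Cexpi theta - zz th _).
  move=> h; apply: Rle_ge; apply: Rmult_le_compat_r => //.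
Qed.

Close Scope ring_scope.

Theorem theorem3p1 (k : nat) (hk : (1 <= k)%coq_nat) (th : nat -> R)
  (hdist : forall j l, (1 <= j)%coq_nat /\ (j <= k)%coq_nat -> (1 <= l)%coq_nat /\ (l <= k)%coq_nat -> j <> l ->
             Cexpi (th j) <> Cexpi (th l))
  (v : nat -> Cplx) (hv : in_Vperp k th v) (hv1 : vnorm k v = 1)
  (theta : R) :
  let x := phi k (Cexpi theta) in
  let m := Cmod (vdot k v x) in
  (* min_{a in Cplx^k} || A-hat a - phi_k(e^{i theta}) ||_2 = m *)
  ((exists a : nat -> Cplx, vnorm k (vsub (Ahat_mul k th a) x) = m) /\
   (forall a : nat -> Cplx, m <= vnorm k (vsub (Ahat_mul k th a) x))) /\
  (* || P_{V^perp} phi_k(e^{i theta}) ||_2 = m *)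
  ((exists p, is_proj_Vperp k th x p) /\
   (forall p, is_proj_Vperp k th x p -> vnorm k p = m)) /\
  (* m >= 2^{-k} prod_j |e^{i theta} - e^{i th_j}| *)
  m >= / 2 ^ k * Rprod k (fun j => Cmod (Csub (Cexpi theta) (Cexpi (th (S j))))).
Proof. exact: (main hdist hv hv1 theta). Qed.
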